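(* Let $G$ be an oriented graph and $a,b$ positive integers. If $G$ admits a homomorphism to some consistent sub-orientation of the Kneser graph $KG_{a,b}$, then for every positive integer $c$ there exists a consistent sub-orientation $\overrightarrow{KG}_{ac,bc}$ of $KG_{ac,bc}$ such that $G$ admits a homomorphism to $\overrightarrow{KG}_{ac,bc}$.
   Context: An oriented graph is a finite directed graph with no directed cycle of length 1 or 2. A homomorphism of an oriented graph $G$ to an oriented graph $H$ is a map $f:V(G)\to V(H)$ such that $f(x)f(y)$ is an arc of $H$ whenever $xy$ is an arc of $G$. The Kneser graph $KG_{a,b}$ has the $b$-subsets of an $a$-set as vertices, two being adjacent iff they are disjoint. A consistent sub-orientation of $KG_{a,b}$ is an oriented graph whose underlying graph is a subgraph of $KG_{a,b}$ and such that for any two arcs $xy$ and $wz$, $x\cap z\neq\emptyset$ implies $y\cap w=\emptyset$. *)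

(* Defs.v *)
From mathcomp Require Import all_boot.
Set Implicit Arguments. Unset Strict Implicit. Unset Printing Implicit Defensive.

Definition oriented (V : finType) (E : rel V) : Prop :=
  (forall x, ~~ E x x) /\ (forall x y, E x y -> ~~ E y x).

Definition is_hom (V W : finType) (E : rel V) (Wv : {set W}) (F : rel W)
  (f : V -> W) : Prop :=
  (forall x, f x \in Wv) /\ (forall x y, E x y -> F (f x) (f y)).

(* (Wv, F) is a consistent sub-orientation of the Kneser graph KG_{a,b}:
   vertices are b-subsets of an a-set (here 'I_a), every arc joins two
   disjoint vertices of Wv, the digraph is oriented, and the consistency
   condition holds. *)
Definition consistent_suborientation (a b : nat)
  (Wv : {set {set 'I_a}}) (F : rel {set 'I_a}) : Prop :=
  (forall v, v \in Wv -> #|v| = b) /\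
  (forall x y, F x y -> [/\ x \in Wv, y \in Wv & [disjoint x & y]]) /\
  oriented F /\
  (forall x y w z, F x y -> F w z -> x :&: z != set0 -> y :&: w == set0).

(* Main.v *)
Require Import Defs.
From mathcomp Require Import all_boot.
From mathcomp Require Import zify.

Section Blow.
Variables (a c : nat).
Hypothesis hc : 0 < c.

Lemma h_lt (p : 'I_a * 'I_c) : p.1 * c + p.2 < a * c.
Proof. case: p => [[i hi] [j hj]] /=. nia. Qed.

Definition hmap (p : 'I_a * 'I_c) : 'I_(a * c) := Ordinal (h_lt p).

Lemma hmap_inj : injective hmap.
Proof.
move=> [[i hi] [j hj]] [[i' hi'] [j' hj']] /(congr1 val) /= E.
have E1 := congr1 (fun n => n %/ c) E; have E2 := congr1 (fun n => n %% c) E.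
move: E1 E2 => /=; rewrite !divnMDl // !modnMDl !divn_small // !modn_small // !addn0.
by move=> e1 e2; subst; congr (_, _); apply: val_inj.
Qed.

Definition phi (S : {set 'I_a}) : {set 'I_(a * c)} :=
  hmap @: setX S [set: 'I_c].

Lemma phiI S T : phi (S :&: T) = phi S :&: phi T.
Proof.
rewrite /phi.
have -> : setX (S :&: T) [set: 'I_c] = setX S [set: 'I_c] :&: setX T [set: 'I_c] :> {set 'I_a * 'I_c}.
  by apply/setP => -[x y]; rewrite !inE; case: (x \in S); case: (x \in T).
by rewrite imsetI //; move=> x y _ _; apply: hmap_inj.
Qed.

Lemma phi_card S : #|phi S| = #|S| * c.
Proof. by rewrite /phi card_imset ?cardsX ?cardsT ?card_ord //; apply: hmap_inj. Qed.

Lemma phi_eq0 S : (phi S == set0) = (S == set0).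
Proof.
by rewrite -!cards_eq0 phi_card muln_eq0 (negbTE (lt0n_neq0 hc)) orbF.
Qed.

Lemma phi_inj : injective phi.
Proof.
move=> S T /(imset_inj hmap_inj) E; apply/setP => s.
have := congr1 (fun X : {set 'I_a * 'I_c} => (s, Ordinal hc) \in X) E; by rewrite /= !inE !andbT.
Qed.

End Blow.

Theorem theorem2 (V : finType) (E : rel V) (a b : nat) :
  oriented E -> 0 < a -> 0 < b ->
  (exists (Wv : {set {set 'I_a}}) (F : rel {set 'I_a}) (f : V -> {set 'I_a}),
      consistent_suborientation b Wv F /\ is_hom E Wv F f) ->
  forall c : nat, 0 < c ->
  exists (Wv : {set {set 'I_(a * c)}}) (F : rel {set 'I_(a * c)})
         (f : V -> {set 'I_(a * c)}),
    consistent_suborientation (b * c) Wv F /\ is_hom E Wv F f.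
Proof.
move=> _ _ _ [Wv [F [f [[Hcard [Harc [[Hirr Hasym] Hcons]]] [Hf HfE]]]]] c hc.
pose p := @phi a c hc.
exists (p @: Wv), [rel x y | [exists u, exists v, [&& F u v, x == p u & y == p v]]], (p \o f).
split; last first.
  split=> [x|x y Exy] /=; first by apply: imset_f.
  by apply/existsP; exists (f x); apply/existsP; exists (f y); rewrite HfE ?eqxx.
have pinj : injective p by apply: phi_inj.
split; first by move=> v /imsetP [u uW ->]; rewrite /p phi_card // Hcard.
split.
  move=> x y /existsP [u /existsP [v /and3P [Fuv /eqP -> /eqP ->]]].
  have [uW vW duv] := Harc _ _ Fuv.
  split; try by apply: imset_f.
  by rewrite -setI_eq0 /p -phiI phi_eq0 // setI_eq0.
split; first split.
- move=> x; apply/negP => /existsP [u /existsP [v /and3P [Fuv /eqP e1 /eqP e2]]].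
  have uv : u = v by apply: pinj; rewrite -e1 -e2.
  by subst v; move: (Hirr u); rewrite Fuv.
- move=> x y /existsP [u /existsP [v /and3P [Fuv /eqP e1 /eqP e2]]].
  apply/negP => /existsP [u' /existsP [v' /and3P [Fuv' /eqP e1' /eqP e2']]].
  have h1 : u' = v by apply: pinj; rewrite -e1' -e2.
  have h2 : v' = u by apply: pinj; rewrite -e2' -e1.
  subst; by move: (Hasym _ _ Fuv); rewrite Fuv'.
- move=> x y w z /existsP [u /existsP [v /and3P [Fuv /eqP -> /eqP ->]]].
  move=> /existsP [u' /existsP [v' /and3P [Fuv' /eqP -> /eqP ->]]].
  rewrite /p -!phiI // !phi_eq0 // => H.
  exact: (Hcons _ _ _ _ Fuv Fuv' H).
Qed.
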